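(* Let $\tilde{\mathbf{M}}$ be a real $n\times n$ skew-symmetric matrix and let $\mathbf{L}$ be a symmetric $n\times n$ matrix with entries in $\{0,1\}$ and all diagonal entries equal to $1$. Let $\tilde{\mathbf{M}}_{\mathbf{L}}=\mathbf{L}\circ\tilde{\mathbf{M}}$, let $\mathbf{D}_{\beta}=\mathbf{I}\circ(\mathbf{L}\mathbf{L}^\top)$ (the diagonal matrix whose $i$-th diagonal entry $\beta_i=n-\bar\beta_i$ is the number of indices $j$ with $L_{ij}=1$, $\bar\beta_i$ being the number of $j$ with $L_{ij}=0$), and let $\bar{\mathbf{L}}=\mathds{1}-\mathbf{L}$. Assume $\mathbf{D}_{\beta}+\bar{\mathbf{L}}$ is invertible. Then the problem $\min_{\mathbf{M}\in\mathcal{M}_T(n)}\|\mathbf{L}\circ(\tilde{\mathbf{M}}-\mathbf{M})\|_F^2$ has the closed-form solution $\mathbf{M}^\ast=(\mathbf{D}_{\beta}+\bar{\mathbf{L}})^{-1}\tilde{\mathbf{M}}_{\mathbf{L}}\mathds{1}+\mathds{1}\tilde{\mathbf{M}}_{\mathbf{L}}(\mathbf{D}_{\beta}+\bar{\mathbf{L}})^{-1}$.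
   Context: $\circ$ denotes the Hadamard (entrywise) product; $\mathds{1}$ is the $n\times n$ all-ones matrix; $\mathbf{I}$ is the identity; $\|\cdot\|_F$ is the Frobenius norm. A TDOA matrix is an $n\times n$ real matrix whose $(i,j)$ entry is $\tau_i-\tau_j$ for some $(\tau_1,\dots,\tau_n)\in\mathbb{R}^n$; $\mathcal{M}_T(n)$ is the set of all $n\times n$ TDOA matrices. The matrix $\mathbf{L}$ encodes which measurements are available: $L_{ij}=1$ if the TDOA between sensors $i$ and $j$ is known, $0$ otherwise. $\tilde{\mathbf{M}}$ is a noisy measured TDOA matrix (skew-symmetric). *)

(* Defs.v *)
From HB Require Import structures.
From mathcomp Require Import all_boot all_order all_algebra.
Set Implicit Arguments. Unset Strict Implicit. Unset Printing Implicit Defensive.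
Import Order.TTheory GRing.Theory Num.Theory.
Local Open Scope ring_scope.

Definition hadamard (R : pzRingType) (n : nat) (A B : 'M[R]_n) : 'M[R]_n :=
  \matrix_(i, j) (A i j * B i j).

Definition ones (R : pzRingType) (n : nat) : 'M[R]_n := const_mx 1.

Definition frob2 (R : pzRingType) (n : nat) (A : 'M[R]_n) : R :=
  \sum_(i < n) \sum_(j < n) (A i j) ^+ 2.

Definition is_TDOA (R : pzRingType) (n : nat) (M : 'M[R]_n) : Prop :=
  exists tau : 'I_n -> R, forall i j, M i j = tau i - tau j.

(* Main.v *)
Require Import Defs.
From HB Require Import structures.
From mathcomp Require Import all_boot all_order all_algebra.
From mathcomp Require Import ring lra.
Import Order.TTheory GRing.Theory Num.Theory.
Local Open Scope ring_scope.

Lemma sum_delta (R : pzRingType) n (i : 'I_n) (F : 'I_n -> R) :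
  \sum_j (i == j)%:R * F j = F i.
Proof.
rewrite (bigD1 i) //= eqxx mul1r big1 ?addr0 // => j hj.
by rewrite eq_sym (negbTE hj) mul0r.
Qed.

Theorem theorem4 (R : realFieldType) (n : nat) (Mt L : 'M[R]_n)
  (hMt : Mt^T = - Mt)
  (hLsym : L^T = L)
  (hL01 : forall i j, L i j = 0 \/ L i j = 1)
  (hLdiag : forall i, L i i = 1)
  (hinv : hadamard 1%:M (L *m L^T) + (ones R n - L) \in unitmx) :
  let MtL := hadamard L Mt in
  let Dbeta := hadamard 1%:M (L *m L^T) in
  let Lbar := ones R n - L in
  let Mstar := invmx (Dbeta + Lbar) *m MtL *m ones R n
               + ones R n *m MtL *m invmx (Dbeta + Lbar) in
  is_TDOA Mstar /\
  forall M : 'M[R]_n, is_TDOA M ->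
    frob2 (hadamard L (Mt - Mstar)) <= frob2 (hadamard L (Mt - M)).
Proof.
move=> MtL Dbeta Lbar Mstar.
set X := Dbeta + Lbar in Mstar hinv *.
have Lsym i j : L i j = L j i.
  by rewrite -{1}hLsym mxE.
have Mtsk i j : Mt i j = - Mt j i.
  by move: (congr1 (fun A : 'M[R]_n => A j i) hMt); rewrite !mxE => ->.
have L2 i j : L i j * L i j = L i j.
  by case: (hL01 i j) => ->; rewrite ?mul0r ?mul1r.
set beta := fun k : 'I_n => \sum_j L k j.
have XE k j : X k j = (k == j)%:R * beta k + 1 - L k j.
  rewrite !mxE /beta -addrA; case: eqP => [<-|_]; last by rewrite /= !mul0r.
  congr (_ * _ + _); apply: eq_bigr => l _.
  by rewrite mxE L2.
have XT : X^T = X.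
  apply/matrixP => i j; rewrite mxE !XE (Lsym i j) eq_sym.
  by case: eqP => [->|]; rewrite ?mul0r.
have MtLT : MtL^T = - MtL.
  by apply/matrixP => i j; rewrite !mxE Lsym Mtsk mulrN.
set T := invmx X *m MtL *m ones R n.
set tau := fun i : 'I_n => \sum_k (invmx X *m MtL) i k.
have TE i j : T i j = tau i.
  rewrite mxE; apply: eq_bigr => k _; by rewrite /ones [const_mx _ _ _]mxE mulr1.
have MsE : Mstar = T - T^T.
  have H2 : ones R n *m MtL *m invmx X = - T^T.
    apply: trmx_inj; rewrite linearN /= trmxK !trmx_mul trmx_inv XT MtLT.
    by rewrite /ones trmx_const mulNmx mulmxN mulmxA.
  by rewrite /Mstar H2.
have MsE2 i j : Mstar i j = tau i - tau j.
  by rewrite MsE [(T - T^T) i j]mxE [(- T^T) i j]mxE [T^T i j]mxE !TE.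
have XT1 : X *m T = MtL *m ones R n.
  by rewrite /T !mulmxA mulmxV // mul1mx.
have row k : \sum_j X k j * tau j = \sum_j L k j * Mt k j.
  have := congr1 (fun A : 'M[R]_n => A k k) XT1.
  rewrite /= [(X *m T) k k]mxE [(MtL *m ones R n) k k]mxE => h.
  transitivity (\sum_j X k j * T j k).
    by apply: eq_bigr => j _; rewrite TE.
  rewrite h; apply: eq_bigr => j _.
  by rewrite /ones [const_mx _ _ _]mxE mulr1 mxE.
set S := \sum_j tau j.
have rowE k : \sum_j X k j * tau j = beta k * tau k + S - \sum_j L k j * tau j.
  rewrite (eq_bigr (fun j => (k == j)%:R * (beta k * tau j) + tau j - L k j * tau j)).
    by rewrite sumrB big_split /= sum_delta.
  by move=> j _; rewrite XE; ring.
have colsum j : \sum_k X k j = n%:R.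
  rewrite (eq_bigr (fun k => (j == k)%:R * beta j + 1 - L j k)).
    rewrite sumrB big_split /= sum_delta sumr_const card_ord /beta.
    by rewrite addrAC subrr add0r.
  by move=> k _; rewrite -XE -{1}XT mxE.
have tot : \sum_k \sum_j X k j * tau j = S * n%:R.
  rewrite exchange_big /S mulr_suml; apply: eq_bigr => j _.
  by rewrite -(colsum j) mulr_sumr; apply: eq_bigr => k _; apply: mulrC.
have z : \sum_k \sum_j L k j * Mt k j = 0.
  set s := (X in X = 0).
  have : s = - s.
    rewrite {2}/s exchange_big -sumrN; apply: eq_bigr => a _.
    rewrite -sumrN; apply: eq_bigr => b _.
    by rewrite (Lsym a b) (Mtsk a b) mulrN.
  move=> h; lra.
have S0 : S = 0.
  have h : S * n%:R = 0 by rewrite -tot (eq_bigr _ (fun k _ => row k)) z.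
  case: (posnP n) => [n0|npos].
    rewrite /S; apply: big1 => j _; move: (ltn_ord j).
    by rewrite [X in (_ < X)%N]n0 ltn0.
  move/eqP: h; rewrite mulf_eq0 pnatr_eq0 (gtn_eqF npos) orbF.
  by move/eqP.
have stat k : \sum_j L k j * (Mt k j - tau k + tau j) = 0.
  have h := rowE k; rewrite row S0 addr0 in h.
  rewrite (eq_bigr (fun j => L k j * Mt k j - L k j * tau k + L k j * tau j)); last first.
    by move=> j _; ring.
  rewrite big_split sumrB /= h -mulr_suml /beta; ring.
have statc k : \sum_i L i k * (Mt i k - tau i + tau k) = 0.
  transitivity (- \sum_j L k j * (Mt k j - tau k + tau j)); last by rewrite stat oppr0.
  rewrite -sumrN; apply: eq_bigr => i _.
  rewrite (Lsym i k) (Mtsk i k); ring.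
split.
  by exists tau => i j; exact: MsE2.
move=> M [sig hsig].
pose e := fun i => sig i - tau i.
have E1 i j : (hadamard L (Mt - Mstar)) i j = L i j * (Mt i j - tau i + tau j).
  rewrite /hadamard mxE [(Mt - Mstar) i j]mxE [(- Mstar) i j]mxE MsE2; congr (_ * _); ring.
have E2 i j : (hadamard L (Mt - M)) i j = L i j * (Mt i j - tau i + tau j - (e i - e j)).
  rewrite /hadamard mxE [(Mt - M) i j]mxE [(- M) i j]mxE hsig /e; congr (_ * _); ring.
have key i j : (L i j * (Mt i j - tau i + tau j - (e i - e j))) ^+ 2 =
   (L i j * (Mt i j - tau i + tau j)) ^+ 2 - 2 * (e i * (L i j * (Mt i j - tau i + tau j)))
   + 2 * (e j * (L i j * (Mt i j - tau i + tau j))) + L i j * (e i - e j) ^+ 2.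
  have h : L i j * L i j - L i j = 0 by rewrite L2 subrr.
  apply/eqP; rewrite -subr_eq0; apply/eqP.
  transitivity ((L i j * L i j - L i j) * ((e i - e j) ^+ 2 - 2 * (Mt i j - tau i + tau j) * (e i - e j))).
    by ring.
  by rewrite h mul0r.
have C1 : \sum_i \sum_j 2 * (e i * (L i j * (Mt i j - tau i + tau j))) = 0.
  apply: big1 => i _.
  by rewrite -mulr_sumr -mulr_sumr stat !mulr0.
have C2 : \sum_i \sum_j 2 * (e j * (L i j * (Mt i j - tau i + tau j))) = 0.
  rewrite exchange_big; apply: big1 => j _.
  by rewrite -mulr_sumr -mulr_sumr statc !mulr0.
have P : 0 <= \sum_i \sum_j L i j * (e i - e j) ^+ 2.
  apply: sumr_ge0 => i _; apply: sumr_ge0 => j _.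
  apply: mulr_ge0; last exact: sqr_ge0.
  by case: (hL01 i j) => ->.
rewrite /frob2.
under eq_bigr => i _ do under eq_bigr => j _ do rewrite E1.
under [X in _ <= X]eq_bigr => i _ do under eq_bigr => j _ do rewrite E2 key.
under [X in _ <= X]eq_bigr => i _ do rewrite !big_split /=.
have C1' : \sum_i \sum_j - (2 * (e i * (L i j * (Mt i j - tau i + tau j)))) = 0.
  under eq_bigr => i _ do rewrite sumrN.
  by rewrite sumrN C1 oppr0.
rewrite !big_split /= C1' C2.
lra.
Qed.
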